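(* Let $a,b,c$ be nonnegative integers such that $s=a+b+c-d$ is positive. Then in $\mathcal{B}_d$: $$f^{(a)}\binom{H_2}{b}e^{(c)}=\sum_{k=s}^{\min(a,c)}(-1)^{k-s}\binom{k-1}{s-1}\binom{b+k}{k}f^{(a-k)}\binom{H_2}{b+k}e^{(c-k)},$$ $$e^{(a)}\binom{H_1}{b}f^{(c)}=\sum_{k=s}^{\min(a,c)}(-1)^{k-s}\binom{k-1}{s-1}\binom{b+k}{k}e^{(a-k)}\binom{H_1}{b+k}f^{(c-k)}$$ (an empty sum being $0$).
   Context: Fix an integer $d\ge 0$. $\mathcal{B}_d$ is the associative $\mathbb{Q}$-algebra with $1$ generated by $e,f,H_1,H_2$ subject to the relations $H_1H_2=H_2H_1$, $H_1e-eH_1=e$, $H_1f-fH_1=-f$, $H_2e-eH_2=-e$, $H_2f-fH_2=f$, $ef-fe=H_1-H_2$, $H_1+H_2=d$, and $H_1(H_1-1)\cdots(H_1-d)=0$. For an element $T$ and integer $m\ge 0$, $T^{(m)}=T^m/m!$ and $\binom{T}{m}=T(T-1)\cdots(T-m+1)/m!$; both are defined to be $0$ for negative $m$. *)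

(* Defs.v *)
From HB Require Import structures.
From mathcomp Require Import all_boot all_order all_algebra.
Set Implicit Arguments. Unset Strict Implicit. Unset Printing Implicit Defensive.
Import Order.TTheory GRing.Theory Num.Theory.
Local Open Scope ring_scope.

Definition dpow (A : algType rat) (T : A) (m : nat) : A :=
  (m`!%:R : rat)^-1 *: T ^+ m.

Definition binomT (A : algType rat) (T : A) (m : nat) : A :=
  (m`!%:R : rat)^-1 *: \prod_(i < m) (T - i%:R).

(* The defining relations of B_d, for elements e f H1 H2 of a Q-algebra A.
   B_d is the universal Q-algebra generated by such elements. *)
Definition Bd_rel (A : algType rat) (d : nat) (e f H1 H2 : A) : Prop :=
  H1 * H2 = H2 * H1 /\
  H1 * e - e * H1 = e /\
  H1 * f - f * H1 = - f /\
  H2 * e - e * H2 = - e /\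
  H2 * f - f * H2 = f /\
  e * f - f * e = H1 - H2 /\
  H1 + H2 = d%:R /\
  \prod_(i < d.+1) (H1 - i%:R) = 0.

(* Main.v *)
Require Import Defs.
From HB Require Import structures.
From mathcomp Require Import all_boot all_order all_algebra.
From mathcomp Require Import zify ring lra.
Import Order.TTheory GRing.Theory Num.Theory.
Local Open Scope ring_scope.


Lemma sum_shift (V : zmodType) (F : nat -> V) n t :
  \sum_(j < n) F (j + t)%N = \sum_(k < n + t) (if (t <= k)%N then F k else 0).
Proof.
elim: n => [|n IH].
  rewrite big_ord0 big1 // => k _.
  have hk : (k < t)%N by have := ltn_ord k; lia.
  by rewrite leqNgt hk.
by rewrite big_ord_recr /= IH addSn big_ord_recr /= leq_addl.
Qed.

Lemma sum_ext (V : zmodType) (F : nat -> V) m n : (m <= n)%N ->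
  (forall k, (m <= k)%N -> (k < n)%N -> F k = 0) ->
  \sum_(k < m) F k = \sum_(k < n) F k.
Proof.
move=> hmn H; rewrite (big_ord_widen n F hmn) big_mkcond /=.
apply: eq_bigr => [[k hk]] _ /=; case: ifP => // h.
by rewrite H //; lia.
Qed.

Lemma sum_pick (V : zmodType) (F : nat -> V) n t : (t < n)%N ->
  \sum_(k < n) (if (k : nat) == t then F k else 0) = F t.
Proof.
move=> ht; rewrite (bigD1 (Ordinal ht)) //= eqxx big1 ?addr0 // => k hk.
by rewrite ifN //; move: hk; rewrite -val_eqE.
Qed.


Section Weights.
Variables (d : nat) (A : algType rat) (e f H1 H2 : A).
Hypothesis hH1e : H1 * e - e * H1 = e.
Hypothesis hH1f : H1 * f - f * H1 = - f.
Hypothesis hef : e * f - f * e = H1 - H2.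
Hypothesis hsum : H1 + H2 = d%:R.
Hypothesis hP : \prod_(i < d.+1) (H1 - i%:R) = 0.

Definition wt (l : rat) (y : A) := H1 * y = l *: y.

Lemma H2E : H2 = d%:R - H1.
Proof. by rewrite -hsum addrAC subrr add0r. Qed.

Lemma natmul (n : nat) (y : A) : n%:R * y = (n%:R : rat) *: y.
Proof. by rewrite mulr_natl scaler_nat. Qed.

Lemma wtZ {l} k {y} : wt l y -> wt l (k *: y).
Proof. by rewrite /wt => hy; rewrite -scalerAr hy !scalerA mulrC. Qed.

Lemma wt0 l : wt l 0.
Proof. by rewrite /wt mulr0 scaler0. Qed.

Lemma wt_e {l y} : wt l y -> wt (l + 1) (e * y).
Proof.
rewrite /wt => hy.
have he : H1 * e = e + e * H1 by apply/eqP; rewrite -subr_eq hH1e.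
by rewrite mulrA he mulrDl -mulrA hy -scalerAr scalerDl scale1r addrC.
Qed.

Lemma wt_f {l y} : wt l y -> wt (l - 1) (f * y).
Proof.
rewrite /wt => hy.
have hf : H1 * f = - f + f * H1 by apply/eqP; rewrite -subr_eq hH1f.
by rewrite mulrA hf mulrDl -mulrA hy -scalerAr scalerBl scale1r mulNr addrC.
Qed.

Lemma wt_H2 {l y} : wt l y -> H2 * y = (d%:R - l) *: y.
Proof. by rewrite /wt => hy; rewrite H2E mulrBl hy natmul scalerBl. Qed.

Lemma ef_comm {l y} : wt l y ->
  e * (f * y) = f * (e * y) + (2%:R * l - d%:R) *: y.
Proof.
move=> hy.
have hE : e * f = (H1 - H2) + f * e by apply/eqP; rewrite -subr_eq hef.
rewrite mulrA hE mulrDl -mulrA mulrBl (wt_H2 hy) hy -scalerBl addrC.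
congr (_ + _ *: _); ring.
Qed.

Lemma prodH {T : A} {m : rat} {y} : T * y = m *: y -> forall n,
  (\prod_(i < n) (T - i%:R)) * y = (\prod_(i < n) (m - i%:R)) *: y.
Proof.
move=> hT; elim=> [|n IH]; first by rewrite !big_ord0 mul1r scale1r.
rewrite !big_ord_recr /= -mulrA mulrBl hT natmul -scalerBl -scalerAr IH.
by rewrite scalerA mulrC.
Qed.

Lemma wt_zero {l y} : wt l y -> (forall i, (i <= d)%N -> l != i%:R) -> y = 0.
Proof.
move=> hy hi.
have hnz : \prod_(i < d.+1) (l - i%:R) != 0.
  apply/prodf_neq0 => i _; rewrite subr_eq0; apply: hi.
  by rewrite -ltnS ltn_ord.
have := prodH hy d.+1; rewrite hP mul0r => /esym /eqP.
by rewrite scaler_eq0 (negbTE hnz) => /eqP.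
Qed.

Lemma dpow0 (T : A) : dpow T 0 = 1.
Proof. by rewrite /dpow fact0 expr0 invr1 scale1r. Qed.

Lemma wt_epow {l y} n : wt l y -> wt (l + n%:R) (e ^+ n * y).
Proof.
move=> hy; elim: n => [|n IH]; first by rewrite expr0 mul1r addr0.
by rewrite exprS -mulrA -addn1 natrD addrA; apply: wt_e.
Qed.

Lemma wt_fpow {l y} n : wt l y -> wt (l - n%:R) (f ^+ n * y).
Proof.
move=> hy; elim: n => [|n IH]; first by rewrite expr0 mul1r subr0.
by rewrite exprS -mulrA -addn1 natrD opprD addrA; apply: wt_f.
Qed.

Lemma wt_dpe {l y} n : wt l y -> wt (l + n%:R) (dpow e n * y).
Proof. by move=> hy; rewrite /dpow -scalerAl; apply/wtZ/wt_epow. Qed.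

Lemma wt_dpf {l y} n : wt l y -> wt (l - n%:R) (dpow f n * y).
Proof. by move=> hy; rewrite /dpow -scalerAl; apply/wtZ/wt_fpow. Qed.

Lemma e_van {l n : nat} {y} : wt l%:R y -> (d < l + n)%N -> dpow e n * y = 0.
Proof.
move=> hy hd; apply: (wt_zero (wt_dpe n hy)) => i hi.
rewrite -natrD eqr_nat; apply/eqP => E; lia.
Qed.

Lemma f_van {l n : nat} {y} : wt l%:R y -> (l < n)%N -> dpow f n * y = 0.
Proof.
move=> hy hd; apply: (wt_zero (wt_dpf n hy)) => i hi.
rewrite subr_eq -natrD eqr_nat; apply/eqP => E; lia.
Qed.


Lemma nz (x : rat) : 0 < x -> x != 0. Proof. by move=> h; rewrite gt_eqF. Qed.

Lemma nS_nz (n : nat) : (1 + n%:R : rat) != 0.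
Proof. by apply: nz; have := ler0n rat n; lra. Qed.

Lemma fact_nz n : (n`!%:R : rat) != 0.
Proof. by rewrite pnatr_eq0 -lt0n fact_gt0. Qed.

Lemma e_fpowS p {mu z} : wt mu z ->
  e * (f ^+ p.+1 * z) = f ^+ p.+1 * (e * z)
    + (p.+1%:R * (2%:R * mu - d%:R - p%:R)) *: (f ^+ p * z).
Proof.
elim: p mu z => [|p IH] mu z hz.
  by rewrite expr1 expr0 mul1r (ef_comm hz); congr (_ + _ *: _); ring.
have hfz := wt_f hz.
rewrite exprSr -mulrA (IH _ _ hfz) (ef_comm hz) mulrDr mulrA -exprSr.
rewrite -scalerAr [f ^+ p * _]mulrA -exprSr -addrA -scalerDl.
congr (_ + _ *: _); ring.
Qed.

Lemma e_dpowS p {mu z} : wt mu z ->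
  e * (dpow f p.+1 * z) = dpow f p.+1 * (e * z)
    + (2%:R * mu - d%:R - p%:R) *: (dpow f p * z).
Proof.
move=> hz; rewrite /dpow -!scalerAl -scalerAr (e_fpowS p hz) scalerDr !scalerA.
congr (_ + _ *: _); rewrite factS natrM.
have h1 := fact_nz p; have h2 := nS_nz p.
by field; rewrite h1 h2.
Qed.

Lemma e_dpow n : e * dpow e n = n.+1%:R *: dpow e n.+1.
Proof.
rewrite /dpow -scalerAr -exprS scalerA factS natrM; congr (_ *: _).
have h1 := fact_nz n; have h2 := nS_nz n.
by field; rewrite h1 h2.
Qed.

Lemma dpow_e n : dpow e n * e = n.+1%:R *: dpow e n.+1.
Proof.
rewrite /dpow -scalerAl -exprSr scalerA factS natrM; congr (_ *: _).
have h1 := fact_nz n; have h2 := nS_nz n.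
by field; rewrite h1 h2.
Qed.

Lemma f_dpow n : f * dpow f n = n.+1%:R *: dpow f n.+1.
Proof.
rewrite /dpow -scalerAr -exprS scalerA factS natrM; congr (_ *: _).
have h1 := fact_nz n; have h2 := nS_nz n.
by field; rewrite h1 h2.
Qed.

Definition dm (T : A) (p k : nat) : A := if (k <= p)%N then dpow T (p - k) else 0.

Lemma dmSS T p k : dm T p.+1 k.+1 = dm T p k.
Proof. by rewrite /dm ltnS subSS. Qed.

Lemma dm_gt T p k : (p < k)%N -> dm T p k = 0.
Proof. by move=> h; rewrite /dm leqNgt h. Qed.

Lemma dm0 T p : dm T p 0 = dpow T p.
Proof. by rewrite /dm leq0n subn0. Qed.

Lemma dm_e_l c k : e * dm e c k = (c%:R - k%:R + 1) *: dm e c.+1 k.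
Proof.
case: (leqP k c) => h.
  rewrite /dm h (leqW h) subSn // e_dpow; congr (_ *: _).
  by rewrite -addn1 natrD natrB.
case: (leqP k c.+1) => h2.
  have -> : k = c.+1 by lia.
  by rewrite dm_gt // mulr0 -addn1 natrD (_ : _ - _ + 1 = 0) ?scale0r //; ring.
by rewrite !dm_gt ?mulr0 ?scaler0 //; lia.
Qed.

Lemma dm_e_r c k : dm e c k * e = (c%:R - k%:R + 1) *: dm e c.+1 k.
Proof.
case: (leqP k c) => h.
  rewrite /dm h (leqW h) subSn // dpow_e; congr (_ *: _).
  by rewrite -addn1 natrD natrB.
case: (leqP k c.+1) => h2.
  have -> : k = c.+1 by lia.
  by rewrite dm_gt // mul0r -addn1 natrD (_ : _ - _ + 1 = 0) ?scale0r //; ring.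
by rewrite !dm_gt ?mul0r ?scaler0 //; lia.
Qed.

Lemma f_dm a k : f * dm f a k = (a.+1%:R - k%:R) *: dm f a.+1 k.
Proof.
case: (leqP k a) => h.
  rewrite /dm h (leqW h) subSn // f_dpow; congr (_ *: _).
  by rewrite -addn1 natrD natrB //; ring.
case: (leqP k a.+1) => h2.
  have -> : k = a.+1 by lia.
  by rewrite dm_gt // mulr0 subrr scale0r.
by rewrite !dm_gt ?mulr0 ?scaler0 //; lia.
Qed.

Lemma e_dm_f a k {mu z} : wt mu z ->
  e * (dm f a k * z) = dm f a k * (e * z)
    + (2%:R * mu - d%:R - (a%:R - k%:R) + 1) *: (dm f a k.+1 * z).
Proof.
move=> hz; case: (ltngtP k a) => h.
- rewrite /dm (ltnW h) h -(subnSK h) (e_dpowS _ hz) subnSK //.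
  congr (_ + _ *: _); rewrite natrB //; rewrite -addn1 natrD; ring.
- by rewrite !dm_gt ?mul0r ?mulr0 ?scaler0 ?addr0 //; lia.
- by rewrite h (dm_gt _ _ _ (ltnSn a)) /dm leqnn subnn dpow0 !mul1r mul0r scaler0 addr0.
Qed.

Lemma wt_dme {l y} c k : wt l y -> wt (l + c%:R - k%:R) (dm e c k * y).
Proof.
move=> hy; case: (leqP k c) => h.
  by rewrite /dm h -addrA -natrB //; apply: wt_dpe.
by rewrite dm_gt // mul0r; apply: wt0.
Qed.


Lemma coefTS (l c D r j : nat) :
  let d' := (l + c.+1 + D)%N in let a := (l.+1 + r)%N in
  ((D.+1 + r)%:R * c.+1%:R) * ((-1) ^+ j.+1 * ('C(D + j.+1, j.+1))%:R) =
  D.+1%:R * ((-1) ^+ j.+1 * ('C(D.+1 + j.+1, j.+1))%:R * (c%:R - j.+1%:R + 1)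
    + (-1) ^+ j * ('C(D.+1 + j, j))%:R *
      (2%:R * (l%:R + c%:R - j%:R) - d'%:R - (a%:R - j%:R) + 1))
  + r%:R * ((-1) ^+ j.+1 * ('C(D + j.+1, j.+1))%:R * (c%:R - j.+1%:R + 1)) :> rat.
Proof.
move=> d' a.
have r1 : ((D.+1 + j.+1) * 'C(D + j.+1, j.+1) = D.+1 * 'C(D.+1 + j.+1, j.+1))%N.
  have := mul_bin_down (D.+1 + j.+1) j.+1.
  by rewrite addSn /= => ->; rewrite (_ : ((D + j.+1).+1 - j.+1 = D.+1)%N) //; lia.
have r2 : (j.+1 * 'C(D + j.+1, j.+1) = D.+1 * 'C(D.+1 + j, j))%N.
  have := mul_bin_left (D.+1 + j) j.
  by rewrite addSnnS (_ : (D + j.+1 - j = D.+1)%N) //; lia.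
have hD : (D.+1%:R : rat) != 0 by rewrite pnatr_eq0.
have e1 : ('C(D.+1 + j.+1, j.+1))%:R = (D.+1 + j.+1)%:R * ('C(D + j.+1, j.+1))%:R / D.+1%:R :> rat.
  by rewrite -natrM r1 natrM mulrAC divff // mul1r.
have e2 : ('C(D.+1 + j, j))%:R = j.+1%:R * ('C(D + j.+1, j.+1))%:R / D.+1%:R :> rat.
  by rewrite -natrM r2 natrM mulrAC divff // mul1r.
rewrite e1 e2 /d' /a exprS !natrD.
field.
by rewrite nS_nz.
Qed.

Lemma Tlem c : forall (l D a N : nat) y, (l + c + D)%N = d -> (l < a)%N ->
  (a < N)%N -> wt l%:R y ->
  \sum_(k < N) ((-1) ^+ k * ('C(D + k, k))%:R) *: (dm f a k * (dm e c k * y)) = 0.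
Proof.
elim: c => [|c IH] l D a N y hd hla haN hy.
  apply: big1 => [[k hk]] _ /=; case: k hk => [|k] hk.
    by rewrite !dm0 dpow0 !mul1r (f_van hy hla) scaler0.
  by rewrite (dm_gt e _ _ (ltn0Sn k)) mul0r mulr0 scaler0.
have hd1 : (l + c + D.+1)%N = d by lia.
have R1 := IH l D.+1 a N y hd1 hla haN hy.
pose g k := dm f a k * (dm e c.+1 k * y).
have gN : forall k, (a < k)%N -> g k = 0 by move=> k hk; rewrite /g dm_gt // mul0r.
pose r := (a - l.+1)%N.
pose al k : rat := (-1) ^+ k * ('C(D + k, k))%:R.
pose al1 k : rat := (-1) ^+ k * ('C(D.+1 + k, k))%:R.
pose u k : rat := c%:R - k%:R + 1.
pose ga k : rat := 2%:R * (l%:R + c%:R - k%:R) - d%:R - (a%:R - k%:R) + 1.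
have hstep : forall k, e * (dm f a k * (dm e c k * y)) = u k *: g k + ga k *: g k.+1.
  move=> k; rewrite (e_dm_f a k (wt_dme c k hy)) [e * (dm e c k * y)]mulrA dm_e_l -scalerAl -scalerAr.
  by rewrite -dmSS.
have R1' : \sum_(k < N) (al1 k * u k) *: g k + \sum_(k < N) (al1 k * ga k) *: g k.+1 = 0.
  transitivity (e * \sum_(k < N) ((-1) ^+ k * ('C(D.+1 + k, k))%:R) *:
     (dm f a k * (dm e c k * y))); last by rewrite R1 mulr0.
  rewrite mulr_sumr -big_split /=; apply: eq_bigr => k _.
  by rewrite -scalerAr hstep scalerDr !scalerA.
have R2 : r%:R *: \sum_(k < N) (al k * u k) *: g k = 0.
  case hr: r => [|r']; first by rewrite scale0r.
  have hla' : (l.+1 < a)%N by rewrite /r in hr; lia.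
  have hd2 : (l.+1 + c + D)%N = d by lia.
  have hy' : wt l.+1%:R (e * y) by rewrite -addn1 natrD; exact: wt_e hy.
  have := IH l.+1 D a N (e * y) hd2 hla' haN hy' => H.
  suff -> : \sum_(k < N) (al k * u k) *: g k = 0 by rewrite scaler0.
  rewrite -[RHS]H; apply: eq_bigr => k _.
  by rewrite [dm e c k * _]mulrA dm_e_r -scalerAl -scalerAr scalerA.
have ext : forall F : nat -> rat, \sum_(k < N) F k *: g k = \sum_(k < N.+1) F k *: g k.
  by move=> F; rewrite big_ord_recr /= gN // scaler0 addr0.
have shift : \sum_(k < N) (al1 k * ga k) *: g k.+1
    = \sum_(k < N.+1) (if (k : nat) is j.+1 then al1 j * ga j else 0) *: g k.
  by rewrite big_ord_recl /= scale0r add0r; apply: eq_bigr.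
have hK : ((D.+1 + r)%:R * c.+1%:R : rat) != 0.
  by rewrite -natrM pnatr_eq0 muln_eq0 negb_or addSn.
suff H : \sum_(k < N) al k *: g k = 0 by exact: H.
apply: (scalerI hK); rewrite scaler0.
transitivity (D.+1%:R *: (\sum_(k < N) (al1 k * u k) *: g k +
   \sum_(k < N) (al1 k * ga k) *: g k.+1) +
   r%:R *: \sum_(k < N) (al k * u k) *: g k); last by rewrite R1' R2 scaler0 addr0.
rewrite (ext al) (ext (fun k => al1 k * u k)) shift (ext (fun k => al k * u k)) scalerDr !scaler_sumr -!big_split /=.
apply: eq_bigr => [[k hk]] _ /=; rewrite !scalerA -!scalerDl; congr (_ *: _).
rewrite /al /al1 /u /ga; case: k hk => [|j] hk.
  rewrite !addn0 !bin0 expr0 !mul1r mulr0 addr0; ring.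
have hdd : d = (l + c.+1 + D)%N by lia.
have haa : a = (l.+1 + r)%N by rewrite /r; lia.
rewrite hdd haa; have := coefTS l c D r j => /= ->; ring.
Qed.


Lemma prod_nat (m b : nat) : \prod_(i < b) (m%:R - i%:R : rat) = (m ^_ b)%:R.
Proof.
elim: b => [|b IH]; first by rewrite big_ord0 ffactn0.
rewrite big_ord_recr /= IH ffactnSr natrM.
case: (leqP b m) => h; first by rewrite natrB.
by rewrite ffact_small // !mul0r.
Qed.

Lemma gbin_nat (m b : nat) :
  (b`!%:R)^-1 * \prod_(i < b) (m%:R - i%:R) = ('C(m, b))%:R :> rat.
Proof. by rewrite prod_nat -bin_ffact natrM mulrC mulfK // fact_nz. Qed.

Lemma binomH2 {mu z} b : wt mu z ->
  binomT H2 b * z = ((b`!%:R)^-1 * \prod_(i < b) ((d%:R - mu) - i%:R)) *: z.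
Proof. by move=> hz; rewrite /binomT -scalerAl (prodH (wt_H2 hz)) scalerA. Qed.

Lemma binomH2_nat {w : nat} (b : nat) {z} : wt w%:R z -> (w <= d)%N ->
  binomT H2 b * z = ('C(d - w, b))%:R *: z.
Proof. by move=> hz hw; rewrite (binomH2 b hz) -natrB // gbin_nat. Qed.

Lemma binQ (n m : nat) : (m <= n)%N ->
  ('C(n, m))%:R = n`!%:R / (m`!%:R * (n - m)`!%:R) :> rat.
Proof.
move=> h; rewrite -(bin_fact h) !natrM mulfK //.
by rewrite mulf_neq0 // fact_nz.
Qed.

Lemma binA (n m j : nat) : (j <= m)%N -> (m <= n)%N ->
  ('C(n, m) * 'C(m, j) = 'C(n, j) * 'C(n - j, m - j))%N.
Proof.
move=> h1 h2; apply/eqP; rewrite -(eqr_nat rat) !natrM; apply/eqP.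
rewrite !binQ ?leq_sub2r //; last by apply: leq_trans h2.
rewrite (_ : (n - j - (m - j) = n - m)%N); last by lia.
have := fact_nz n; have := fact_nz m; have := fact_nz j; have := fact_nz (n - m);
have := fact_nz (m - j); have := fact_nz (n - j) => *.
by field; rewrite !fact_nz.
Qed.

Lemma e_dm_wt {lam c k : nat} {y} : wt lam%:R y -> (k <= c)%N ->
  wt (lam + (c - k))%:R (dm e c k * y).
Proof. by move=> hy h; rewrite /dm h natrD; apply: wt_dpe. Qed.

Lemma S1w (a b c lam N : nat) y : (a + b + c)%N = d.+1 -> (a < N)%N -> wt lam%:R y ->
  \sum_(k < N) ((-1) ^+ k * ('C(b + k, k))%:R) *:
     (dm f a k * (binomT H2 (b + k) * (dm e c k * y))) = 0.
Proof.
move=> habc haN hy; case: (leqP a lam) => hla.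
  apply: big1 => [[k hk]] _ /=.
  case: (leqP k c) => hkc; last by rewrite (dm_gt e _ _ hkc) !mul0r !mulr0 scaler0.
  case: (leqP (lam + (c - k)) d) => hw.
    rewrite (binomH2_nat _ (e_dm_wt hy hkc) hw) (@bin_small (d - (lam + (c - k))) (b + k)).
      by rewrite mulr0n scale0r mulr0 scaler0.
    lia.
  by rewrite /dm hkc (e_van hy hw) !mulr0 scaler0.
pose D := (d - lam - c)%N.
have hD : (lam + c + D)%N = d by rewrite /D; lia.
transitivity (('C(D, b))%:R *: \sum_(k < N) ((-1) ^+ k * ('C(D + k, k))%:R) *:
  (dm f a k * (dm e c k * y))); last by rewrite (Tlem _ _ _ _ _ _ hD hla haN hy) scaler0.
rewrite scaler_sumr; apply: eq_bigr => [[k hk]] _ /=.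
case: (leqP k c) => hkc; last by rewrite (dm_gt e _ _ hkc) !mul0r !mulr0 !scaler0.
have hw : (lam + (c - k) <= d)%N by lia.
rewrite (binomH2_nat _ (e_dm_wt hy hkc) hw) -scalerAr !scalerA.
congr (_ *: _).
have -> : (d - (lam + (c - k)) = D + k)%N by rewrite /D; lia.
have hbD : (b + k <= D + k)%N by rewrite /D; lia.
have := binA (D + k) (b + k) k (leq_addl _ _) hbD.
rewrite !addnK => H.
rewrite -mulrA -natrM [(_ * _)%N]mulnC H natrM; ring.
Qed.

Lemma Vw (b c lam : nat) y : (d < b + c)%N -> wt lam%:R y ->
  binomT H2 b * (dpow e c * y) = 0.
Proof.
move=> hbc hy; case: (leqP (lam + c) d) => hw.
  rewrite (binomH2_nat _ _ hw) ?bin_small ?scale0r //; first by lia.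
  by rewrite natrD; apply: wt_dpe.
by rewrite (e_van hy hw) mulr0.
Qed.

Lemma evprod (P : pred 'I_d.+1) :
  horner_alg H1 (\prod_(i | P i) ('X - (i : nat)%:R)) = \prod_(i | P i) (H1 - (i : nat)%:R).
Proof.
rewrite rmorph_prod; apply: eq_bigr => i _.
by rewrite rmorphB /= horner_algX rmorph_nat.
Qed.

Lemma prodD1 (P : pred 'I_d.+1) j : P j ->
  \prod_(i | P i) (H1 - (i : nat)%:R)
    = (H1 - (j : nat)%:R) * \prod_(i | P i && (i != j)) (H1 - (i : nat)%:R).
Proof.
move=> hj; rewrite -(evprod P) -(evprod (fun i => P i && (i != j))) (bigD1 j hj) /=.
by rewrite rmorphM rmorphB /= horner_algX rmorph_nat.
Qed.

Lemma Dec (Z : A) :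
  (forall (m : nat) y, (m <= d)%N -> wt m%:R y -> Z * y = 0) -> Z = 0.
Proof.
move=> hZ.
have key : forall n m, (0 < n)%N -> (m + n <= d.+1)%N ->
    Z * \prod_(i < d.+1 | ~~ ((m <= i) && (i < m + n))%N) (H1 - (i : nat)%:R) = 0.
  elim=> [//|n IH] m _ hmn; case: n IH hmn => [|n] IH hmn.
    have hm : (m < d.+1)%N by lia.
    apply: (hZ m); first by lia.
    rewrite /wt; apply/eqP; rewrite -subr_eq0 -natmul -mulrBl.
    have := prodD1 predT (Ordinal hm) isT.
    rewrite hP => /esym E.
    rewrite (eq_bigl (fun i : 'I_d.+1 => predT i && (i != Ordinal hm))) ?E //.
    by move=> i /=; rewrite -val_eqE /=; lia.
  have hj : (m + n.+1 < d.+1)%N by lia.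
  have hm : (m < d.+1)%N by lia.
  have h1 : (m + n.+1 <= d.+1)%N by lia.
  have h2 : (m.+1 + n.+1 <= d.+1)%N by lia.
  have W1 := IH m isT h1.
  have W2 := IH m.+1 isT h2.
  rewrite (prodD1 _ (Ordinal hj)) /= in W1; last by lia.
  rewrite (prodD1 _ (Ordinal hm)) /= in W2; last by lia.
  set W := \prod_(i < d.+1 | _) _.
  have E1 : \prod_(i < d.+1 | ~~ ((m <= i) && (i < m + n.+1))%N && (i != Ordinal hj))
      (H1 - (i : nat)%:R) = W.
    by apply: eq_bigl => i; rewrite -val_eqE /=; lia.
  have E2 : \prod_(i < d.+1 | ~~ ((m.+1 <= i) && (i < m.+1 + n.+1))%N && (i != Ordinal hm))
      (H1 - (i : nat)%:R) = W.
    by apply: eq_bigl => i; rewrite -val_eqE /=; lia.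
  rewrite E1 in W1; rewrite E2 in W2.
  have hn : (n.+1%:R : rat) != 0 by rewrite pnatr_eq0.
  apply: (scalerI hn); rewrite scaler0 scalerAr -natmul.
  have -> : (n.+1%:R : A) = (H1 - m%:R) - (H1 - (m + n.+1)%:R).
    by rewrite opprB addrC addrA subrK -natrB ?leq_addr // addKn.
  by rewrite mulrBl mulrBr W1 W2 subrr.
have := key d.+1 0%N isT (leqnn _).
by rewrite big_pred0 ?mulr1 // => i /=; rewrite add0n ltn_ord.
Qed.


Definition G (a b c k : nat) : A := dm f a k * binomT H2 (b + k) * dm e c k.

Lemma S1alg a b c N : (a + b + c)%N = d.+1 -> (a < N)%N ->
  \sum_(k < N) ((-1) ^+ k * ('C(b + k, k))%:R) *: G a b c k = 0.
Proof.
move=> h hN; apply: Dec => m y hm hy; rewrite mulr_suml.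
rewrite -[RHS](S1w a b c m N y h hN hy); apply: eq_bigr => k _.
by rewrite -scalerAl /G !mulrA.
Qed.

Lemma Valg b c : (d < b + c)%N -> binomT H2 b * dpow e c = 0.
Proof.
move=> h; apply: Dec => m y hm hy.
by rewrite -mulrA (Vw b c m y h hy).
Qed.

Lemma fG a b c k : f * G a b c k = (a.+1%:R - k%:R) *: G a.+1 b c k.
Proof. by rewrite /G !mulrA f_dm -!scalerAl. Qed.

Lemma G0 a b c k : ((a < k) || (c < k))%N -> G a b c k = 0.
Proof.
case/orP => h; rewrite /G.
  by rewrite dm_gt // !mul0r.
by rewrite (dm_gt e _ _ h) mulr0.
Qed.

Lemma dm_shift T p t j : (t <= p)%N -> dm T (p - t) j = dm T p (j + t).
Proof.
move=> h; rewrite /dm.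
have -> : (j <= p - t)%N = (j + t <= p)%N by lia.
by case: ifP => // _; congr dpow; lia.
Qed.

Lemma G_shift a b c t j : (t <= a)%N -> (t <= c)%N ->
  G (a - t) (b + t) (c - t) j = G a b c (j + t).
Proof.
move=> h1 h2; rewrite /G !dm_shift //.
by rewrite (_ : (b + t + j = b + (j + t))%N) //; lia.
Qed.


Definition cf (s b k : nat) : rat :=
  if (s <= k)%N then (-1) ^+ (k - s) * ('C(k.-1, s.-1))%:R * ('C(b + k, k))%:R else 0.

Lemma coefM (a b u j : nat) :
  let k := (u.+2 + j)%N in
  ('C(b + u.+1, u.+1))%:R * (a.+1%:R - u.+1%:R) * ((-1) ^+ j * ('C(b + k, j.+1))%:R)
  + (-1) ^+ j.+1 * ('C(u.+1 + j, u))%:R * ('C(b + k, k))%:R * (a.+1%:R - k%:R)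
  = a.+1%:R * ((-1) ^+ j * ('C(u.+1 + j, u.+1))%:R * ('C(b + k, k))%:R) :> rat.
Proof.
move=> k.
have i1 : ('C(b + u.+1, u.+1) * 'C(b + k, j.+1) =
          'C(b + k, k) * ('C(u.+1 + j, u.+1) + 'C(u.+1 + j, u)))%N.
  rewrite -binS (_ : (u.+1 + j).+1 = k)%N; last by rewrite /k; lia.
  apply/eqP; rewrite -(eqr_nat rat) !natrM; apply/eqP.
  rewrite !binQ; try (rewrite /k; lia).
  rewrite (_ : (b + u.+1 - u.+1 = b)%N); last lia.
  rewrite (_ : (b + k - j.+1 = b + u.+1)%N); last (rewrite /k; lia).
  rewrite (_ : (b + k - k = b)%N); last lia.
  rewrite (_ : (k - u.+1 = j.+1)%N); last (rewrite /k; lia).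
  have := fact_nz b; have := fact_nz k; have := fact_nz (b + k);
  have := fact_nz (b + u.+1); have := fact_nz u.+1; have := fact_nz j.+1 => *.
  by field; rewrite !fact_nz.
have i2 : (u.+1 * 'C(u.+1 + j, u.+1) = j.+1 * 'C(u.+1 + j, u))%N.
  by rewrite mul_bin_left; congr (_ * _)%N; lia.
have hB : ('C(b + u.+1, u.+1))%:R != 0 :> rat.
  by rewrite pnatr_eq0 -lt0n bin_gt0 leq_addl.
have e1 : ('C(b + k, j.+1))%:R = ('C(b + k, k))%:R * (('C(u.+1 + j, u.+1))%:R
    + ('C(u.+1 + j, u))%:R) / ('C(b + u.+1, u.+1))%:R :> rat.
  by rewrite -natrD -natrM -i1 natrM mulrC mulKf.
have e2 : ('C(u.+1 + j, u))%:R = u.+1%:R * ('C(u.+1 + j, u.+1))%:R / j.+1%:R :> rat.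
  by rewrite -natrM i2 natrM mulrC mulKf // pnatr_eq0.
rewrite e1 e2 /k exprS.
field.
by rewrite hB nS_nz.
Qed.

Lemma Main a : forall b c N, (d < a + b + c)%N -> (a < N)%N ->
  G a b c 0 = \sum_(k < N) cf (a + b + c - d) b k *: G a b c k.
Proof.
elim: a => [|a IH] b c N hd haN.
  rewrite {1}/G !dm0 dpow0 mul1r addn0 Valg; last by lia.
  apply/esym/big1 => [[k hk]] _ /=; rewrite /cf.
  case: ifP => h; last by rewrite scale0r.
  by rewrite G0 ?scaler0 //; apply/orP; left; lia.
case: (eqVneq (a.+1 + b + c - d)%N 1%N) => hs.
  have hs1 : (a.+1 + b + c)%N = d.+1 by lia.
  have hS := S1alg a.+1 b c N hs1 haN.
  rewrite hs; case: N haN hS => [//|N'] haN hS.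
  rewrite big_ord_recl /= in hS; rewrite big_ord_recl /=.
  rewrite {1}/cf /= scale0r add0r.
  move/eqP: hS; rewrite expr0 mul1r addn0 bin0 scale1r addr_eq0 => /eqP ->.
  rewrite -sumrN; apply: eq_bigr => j _.
  by rewrite /cf /= subn1 /= bin0 mulr1 exprS mulN1r mulNr scaleNr opprK.
have hd' : (d < a + b + c)%N by lia.
set t := (a + b + c - d)%N.
have [u tu] : exists u, t = u.+1 by exists t.-1; rewrite /t; lia.
have IHa := IH b c N hd' (ltnW haN).
rewrite -/t in IHa.
pose G' := G a.+1 b c.
have E : a.+1%:R *: G' 0 = \sum_(k < N) (cf t b k * (a.+1%:R - k%:R)) *: G' k.
  have := congr1 (fun x => f * x) IHa; rewrite /= fG mulr0n subr0 mulr_sumr => ->.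
  by apply: eq_bigr => k _; rewrite -scalerAr fG scalerA.
have ha1 : (a.+1%:R : rat) != 0 by rewrite pnatr_eq0.
rewrite (_ : (a.+1 + b + c - d = t.+1)%N); last by rewrite /t; lia.
apply: (scalerI ha1); rewrite E scaler_sumr.
case: (boolP ((t <= a.+1) && (t <= c))%N) => hA; last first.
  apply: eq_bigr => [[k hk]] _ /=; rewrite /cf.
  case: (leqP t k) => h1.
    by rewrite /G' G0 ?scaler0 //; lia.
  by rewrite mul0r scale0r ifN ?scale0r ?scaler0 //; lia.
have hta : (t <= a.+1)%N by case/andP: hA.
have htc : (t <= c)%N by case/andP: hA.
have hsum1 : (a.+1 - t + (b + t) + (c - t))%N = d.+1 by rewrite /t; lia.
have hN1 : (a.+1 - t < N)%N by lia.
have hS : \sum_(j < N) ((-1) ^+ j * ('C(b + t + j, j))%:R) *: G' (j + t)%N = 0.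
  rewrite -[RHS](S1alg _ _ _ _ hsum1 hN1); apply: eq_bigr => j _.
  by rewrite /G' G_shift.
clear IHa; case: N haN hS E hN1 => [//|N'] haN hS E hN1.
have hGt : G' t = - \sum_(i < N') ((-1) ^+ i.+1 * ('C(b + t + i.+1, i.+1))%:R) *: G' (i.+1 + t)%N.
  apply/eqP; rewrite -addr_eq0; apply/eqP; rewrite -[RHS]hS big_ord_recl; congr (_ + _).
  by rewrite expr0 mul1r addn0 bin0 scale1r add0n.
have hGt' : G' t = \sum_(k < N'.+1) (if (t.+1 <= k)%N then
     ((-1) ^+ (k - t.+1) * ('C(b + k, k - t))%:R) *: G' k else 0).
  rewrite hGt -sumrN.
  transitivity (\sum_(j < N') (fun k => ((-1) ^+ (k - t.+1) * ('C(b + k, k - t))%:R) *: G' k)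
                 (j + t.+1)%N).
    apply: eq_bigr => j _.
    rewrite exprS mulN1r mulNr scaleNr opprK addSnnS.
    have -> : (j + t.+1 - t = j.+1)%N by lia.
    by rewrite addnK (_ : (b + (j + t.+1) = b + t + j.+1)%N) //; lia.
  rewrite (sum_shift _ (fun k => ((-1) ^+ (k - t.+1) * ('C(b + k, k - t))%:R) *: G' k)).
  symmetry; apply: (sum_ext _ (fun k : nat => if (t.+1 <= k)%N then ((-1) ^+ (k - t.+1) * ('C(b + k, k - t))%:R) *: G' k else 0)); first by lia.
  move=> k h1 h2; case: ifP => // _.
  by rewrite /G' G0 ?scaler0 //; lia.
pose w := cf t b t * (a.+1%:R - t%:R).
have htN : (t < N'.+1)%N by lia.
transitivity (\sum_(k < N'.+1) (if (k : nat) == t then w *: G' k else 0) +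
  \sum_(k < N'.+1) (if (t.+1 <= k)%N then (cf t b k * (a.+1%:R - k%:R)) *: G' k else 0)).
  rewrite -big_split; apply: eq_bigr => [[k hk]] _ /=.
  case: (ltngtP k t) => h.
  - rewrite /cf ifN; last by rewrite -ltnNge.
    by rewrite mul0r scale0r addr0.
  - by rewrite add0r.
  - by rewrite h addr0.
rewrite (@sum_pick _ (fun k => w *: G' k) _ _ htN) hGt' scaler_sumr -big_split.
apply: eq_bigr => [[k hk]] _ /=.
case: (leqP t.+1 k) => hk1; last first.
  by rewrite /cf leqNgt hk1 /= scale0r !scaler0 addr0.
have [j kj] : exists j, k = (t.+1 + j)%N by exists (k - t.+1)%N; lia.
rewrite kj !scalerA -scalerDl; congr (_ *: _).
rewrite /w /cf leqnn !ifT; try lia.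
rewrite subnn expr0 mul1r binn mul1r.
rewrite addKn (_ : (t.+1 + j - t = j.+1)%N); last by lia.
rewrite tu /=.
apply: (etrans _ (etrans (coefM a b u j) _)); rewrite /=; ring.
Qed.
End Weights.

Lemma polyrev d : \prod_(i < d.+1) (d%:R - 'X - i%:R : {poly rat})
  = (-1) ^+ d.+1 * \prod_(i < d.+1) ('X - i%:R).
Proof.
rewrite (reindex_inj rev_ord_inj) /=.
transitivity (\prod_(i < d.+1) - ('X - (i : nat)%:R : {poly rat})).
  apply: eq_bigr => i _; rewrite subSS natrB; last by have := ltn_ord i; lia.
  ring.
by rewrite prodrN card_ord.
Qed.

Lemma sym_rel d (A : algType rat) (e f H1 H2 : A) :
  Bd_rel d e f H1 H2 -> Bd_rel d f e H2 H1.
Proof.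
case=> [h12 [h1e [h1f [h2e [h2f [hef [hsum hP]]]]]]].
split; first by [].
split; first by [].
split; first by [].
split; first by [].
split; first by [].
split; first by rewrite -opprB hef opprB.
split; first by rewrite addrC.
have H2E : H2 = d%:R - H1 by rewrite -hsum addrAC subrr add0r.
transitivity (horner_alg H1 (\prod_(i < d.+1) (d%:R - 'X - i%:R : {poly rat}))).
  rewrite rmorph_prod; apply: eq_bigr => i _.
  by rewrite !rmorphB /= horner_algX !rmorph_nat H2E.
rewrite polyrev rmorphM rmorph_prod (eq_bigr (fun i : 'I_d.+1 => H1 - (i : nat)%:R)).
  by rewrite hP mulr0.
by move=> i _; rewrite rmorphB /= horner_algX rmorph_nat.
Qed.

Lemma part1 (d a b c : nat) (A : algType rat) (e f H1 H2 : A) :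
  Bd_rel d e f H1 H2 ->
  (d < a + b + c)%N ->
  dpow f a * binomT H2 b * dpow e c =
    \sum_((a + b + c - d)%N <= k < (minn a c).+1)
      ((-1) ^+ (k - (a + b + c - d)) * ('C(k.-1, (a + b + c - d).-1))%:R
         * ('C(b + k, k))%:R) *:
        (dpow f (a - k) * binomT H2 (b + k) * dpow e (c - k)).
Proof.
case=> [_ [h1e [h1f [_ [_ [hef [hsum hP]]]]]]] hd.
have M := @Main d A e f H1 H2 h1e h1f hef hsum hP a b c a.+1 hd (ltnSn a).
set s := (a + b + c - d)%N in M *.
transitivity (G A e f H2 a b c 0); first by rewrite /G !dm0 addn0.
rewrite M big_geq_mkord big_mkcond /=.
have h1 : ((minn a c).+1 <= a.+1)%N by lia.
rewrite -(@sum_ext _ (fun k => cf s b k *: G A e f H2 a b c k) _ _ h1); last first.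
  by move=> k hk1 hk2; rewrite G0 ?scaler0 //; lia.
rewrite [RHS]big_mkcond; apply: eq_bigr => [[k hk]] _ /=.
rewrite /cf; case: ifP => h; last by rewrite scale0r.
have hka : (k <= a)%N by lia.
have hkc : (k <= c)%N by lia.
by rewrite /G /dm hka hkc.
Qed.

Theorem theorem6p2 (d a b c : nat) (A : algType rat) (e f H1 H2 : A) :
  Bd_rel d e f H1 H2 ->
  (d < a + b + c)%N ->
  let s := (a + b + c - d)%N in
  dpow f a * binomT H2 b * dpow e c =
    \sum_(s <= k < (minn a c).+1)
      ((-1) ^+ (k - s) * ('C(k.-1, s.-1))%:R * ('C(b + k, k))%:R) *:
        (dpow f (a - k) * binomT H2 (b + k) * dpow e (c - k))
  /\
  dpow e a * binomT H1 b * dpow f c =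
    \sum_(s <= k < (minn a c).+1)
      ((-1) ^+ (k - s) * ('C(k.-1, s.-1))%:R * ('C(b + k, k))%:R) *:
        (dpow e (a - k) * binomT H1 (b + k) * dpow f (c - k)).
Proof.
move=> hrel hd s; split; first exact: (@part1 d a b c A e f H1 H2 hrel hd).
exact: (@part1 d a b c A f e H2 H1 (@sym_rel d A e f H1 H2 hrel) hd).
Qed.
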